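(* Let $\eta>0$ and $\beta\in\mathbb{R}$. Let $\widehat{\mathcal{L}}_1,\widehat{\mathcal{L}}_2\in\mathbb{R}^{N\times N}$ satisfy $\langle \widehat{\mathcal{L}}_i\mathbf{x},\mathbf{x}\rangle\le 0$ for all $\mathbf{x}\in\mathbb{R}^N$ and $i=1,2$, and additionally $\langle \widehat{\mathcal{L}}_1\mathbf{w},\widehat{\mathcal{L}}_2\mathbf{w}\rangle\ge 0$ for all $\mathbf{w}\in\mathbb{R}^N$. Set $\gamma_*:=\frac{\eta^2+\beta^2}{\eta}$ and $$\mathcal{P}_{\gamma_*}:=\left[\eta I-\widehat{\mathcal{L}}_2+\beta^2(\eta I-\widehat{\mathcal{L}}_1)^{-1}\right](\gamma_* I-\widehat{\mathcal{L}}_2)^{-1}.$$ Then $\mathcal{P}_{\gamma_*}$ is invertible and its two-norm condition number satisfies $$\kappa(\mathcal{P}_{\gamma_*})=\|\mathcal{P}_{\gamma_*}\|\,\|\mathcal{P}_{\gamma_*}^{-1}\|\le 2+\frac{\beta^2}{\eta^2}.$$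
   Context: $\langle\cdot,\cdot\rangle$ and $\|\cdot\|$ denote the Euclidean inner product and the induced vector norm / operator two-norm on $\mathbb{R}^N$. The hypothesis $\langle \widehat{\mathcal{L}}_i\mathbf{x},\mathbf{x}\rangle\le 0$ for all $\mathbf{x}$ (field of values in the closed left half plane) guarantees that $\eta I-\widehat{\mathcal{L}}_1$ and $\gamma I-\widehat{\mathcal{L}}_2$ are invertible for $\eta,\gamma>0$. The operator $\mathcal{P}_{\gamma_*}$ is the Schur complement $\eta I-\widehat{\mathcal{L}}_2+\beta^2(\eta I-\widehat{\mathcal{L}}_1)^{-1}$ of the block matrix $\begin{bmatrix}\eta I-\widehat{\mathcal{L}}_1 & \phi I\\ -\frac{\beta^2}{\phi}I & \eta I-\widehat{\mathcal{L}}_2\end{bmatrix}$ ($\phi\neq0$), right-preconditioned by $(\gamma_* I-\widehat{\mathcal{L}}_2)^{-1}$. *)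

(* Defs.v *)
From HB Require Import structures.
From mathcomp Require Import all_boot all_order all_algebra.
From mathcomp Require Import classical_sets reals.
Set Implicit Arguments. Unset Strict Implicit. Unset Printing Implicit Defensive.
Import Order.TTheory GRing.Theory Num.Theory.
Local Open Scope ring_scope.
Local Open Scope classical_set_scope.

Definition dotv {R : realType} {N : nat} (x y : 'cV[R]_N) : R :=
  \sum_(i < N) x i 0 * y i 0.

Definition vnorm {R : realType} {N : nat} (x : 'cV[R]_N) : R :=
  Num.sqrt (dotv x x).

Definition opnorm {R : realType} {N : nat} (A : 'M[R]_N) : R :=
  sup [set vnorm (A *m x) | x in [set x : 'cV[R]_N | vnorm x <= 1]].

Definition Pgamma {R : realType} {N : nat} (eta beta gamma : R) (L1 L2 : 'M[R]_N)
  : 'M[R]_N :=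
  (eta%:M - L2 + beta ^+ 2 *: invmx (eta%:M - L1)) *m invmx (gamma%:M - L2).

(* Main.v *)
Require Import Defs.
From mathcomp Require Import all_boot all_order all_algebra.
From mathcomp Require Import classical_sets reals.
From mathcomp Require Import ring lra.
Import Order.TTheory GRing.Theory Num.Theory.
Set Implicit Arguments. Unset Strict Implicit.
Local Open Scope ring_scope.

Lemma dotvC (R : realType) N (x y : 'cV[R]_N) : dotv x y = dotv y x.
Proof. by rewrite /dotv; apply: eq_bigr => i _; rewrite mulrC. Qed.
Lemma dotvDl (R : realType) N (x y z : 'cV[R]_N) : dotv (x + y) z = dotv x z + dotv y z.
Proof. by rewrite /dotv -big_split; apply: eq_bigr => i _; rewrite mxE mulrDl. Qed.
Lemma dotvZl (R : realType) N (a : R) (x z : 'cV[R]_N) : dotv (a *: x) z = a * dotv x z.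
Proof. by rewrite /dotv mulr_sumr; apply: eq_bigr => i _; rewrite mxE mulrA. Qed.
Lemma dotvNl (R : realType) N (x z : 'cV[R]_N) : dotv (- x) z = - dotv x z.
Proof. by rewrite /dotv -sumrN; apply: eq_bigr => i _; rewrite mxE mulNr. Qed.
Lemma dotvBl (R : realType) N (x y z : 'cV[R]_N) : dotv (x - y) z = dotv x z - dotv y z.
Proof. by rewrite dotvDl dotvNl. Qed.
Lemma dotvDr (R : realType) N (x y z : 'cV[R]_N) : dotv z (x + y) = dotv z x + dotv z y.
Proof. by rewrite dotvC dotvDl !(dotvC z). Qed.
Lemma dotvZr (R : realType) N (a : R) (x z : 'cV[R]_N) : dotv z (a *: x) = a * dotv z x.
Proof. by rewrite dotvC dotvZl dotvC. Qed.
Lemma dotv_ge0 (R : realType) N (x : 'cV[R]_N) : 0 <= dotv x x.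
Proof. by apply: sumr_ge0 => i _; rewrite -expr2 sqr_ge0. Qed.
Lemma dotv_eq0 (R : realType) N (x : 'cV[R]_N) : dotv x x = 0 -> x = 0.
Proof.
move=> H.
have H' : forall i : 'I_N, x i 0 * x i 0 = 0.
  move=> i; apply: (psumr_eq0P _ H) => // k _; by rewrite -expr2 sqr_ge0.
apply/matrixP => i j; rewrite (ord1 j) !mxE.
by have /eqP := H' i; rewrite mulf_eq0 orbb => /eqP.
Qed.
Lemma dotv0 (R : realType) N (z : 'cV[R]_N) : dotv 0 z = 0.
Proof. by rewrite /dotv big1 // => i _; rewrite mxE mul0r. Qed.
Lemma vnorm0 (R : realType) N : vnorm (0 : 'cV[R]_N) = 0.
Proof. by rewrite /vnorm dotv0 sqrtr0. Qed.
Lemma mulSL (R : realType) N (a : R) (L : 'M[R]_N) (v : 'cV[R]_N) :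
  (a%:M - L) *m v = a *: v - L *m v.
Proof. by rewrite mulmxBl mul_scalar_mx. Qed.
Lemma inj_unit (R : realType) N (A : 'M[R]_N) :
  (forall x : 'cV[R]_N, A *m x = 0 -> x = 0) -> A \in unitmx.
Proof.
move=> H; rewrite -unitmx_tr unitmxE unitfE; apply/negP => /det0P [v nv vA].
have : A *m v^T = 0 by rewrite -[A]trmxK -trmx_mul vA trmx0.
move=> /H /(congr1 trmx); rewrite trmxK trmx0 => v0.
by rewrite v0 eqxx in nv.
Qed.
Lemma posdef_unit (R : realType) N (e : R) (L : 'M[R]_N) :
  0 < e -> (forall x, dotv (L *m x) x <= 0) -> (e%:M - L) \in unitmx.
Proof.
move=> he hL; apply: inj_unit => x hx.
have h1 : dotv ((e%:M - L) *m x) x = e * dotv x x - dotv (L *m x) x.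
  by rewrite mulSL dotvBl dotvZl.
rewrite hx dotv0 in h1.
have h2 := hL x; have h3 := dotv_ge0 x.
apply: dotv_eq0; nra.
Qed.
Lemma vnorm_le (R : realType) N (K : R) (x y : 'cV[R]_N) :
  0 <= K -> dotv y y <= K ^+ 2 * dotv x x -> vnorm y <= K * vnorm x.
Proof.
move=> hK h; rewrite /vnorm -(ger0_norm hK) -sqrtr_sqr -sqrtrM ?sqr_ge0 //.
by rewrite ler_wsqrtr // real_normK ?num_real.
Qed.
Lemma opnorm_le (R : realType) N (K : R) (A : 'M[R]_N) :
  0 <= K -> (forall x, vnorm (A *m x) <= K * vnorm x) -> opnorm A <= K.
Proof.
move=> hK h; apply: ge_sup.
  by exists 0, 0 => //=; rewrite ?vnorm0 ?mulmx0 ?vnorm0.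
move=> _ [x /= hx <-]; apply: le_trans (h x) _.
by rewrite -{2}(mulr1 K) ler_wpM2l.
Qed.
Lemma opnorm_ge0 (R : realType) N (K : R) (A : 'M[R]_N) :
  (forall x, vnorm (A *m x) <= K * vnorm x) -> 0 <= opnorm A.
Proof.
move=> h; apply: ub_le_sup.
  exists (`|K|) => _ [x /= hx <-]; apply: le_trans (h x) _.
  apply: le_trans (ler_norm _) _; rewrite normrM; rewrite -{2}(mulr1 `|K|).
  apply: ler_wpM2l => //; rewrite ger0_norm //; exact: sqrtr_ge0.
by exists 0 => //=; rewrite ?vnorm0 ?mulmx0 ?vnorm0.
Qed.

Lemma core (R : realType) N (eta c : R) (w p q s x y : 'cV[R]_N) : 0 < eta -> 0 <= c ->
 x = (eta+c) *: (eta *: w - p) - (eta *: q - s) ->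
 y = eta *: (eta *: w - p) - (eta *: q - s) + (c*eta) *: w ->
 dotv p w <= 0 -> 0 <= dotv p q -> dotv s p <= 0 ->
 dotv y y <= dotv x x /\ eta^+2 * dotv x x <= (eta+c)^+2 * dotv y y.
Proof.
move=> he hc hx hy h1 h2 h3.
have hyx : y = x + c *: p.
  by rewrite hy hx; apply/matrixP => i j; rewrite !mxE; ring.
have hyp : dotv y p = eta*(eta*dotv p w - dotv p p) - (eta*dotv p q - dotv s p)
    + c*eta*dotv p w.
  by rewrite hy !(dotvDl,dotvNl,dotvZl) (dotvC w) (dotvC q).
have hP := dotv_ge0 p.
have F1 : dotv y p <= - eta * dotv p p.
  have e1 : (eta * eta) * dotv p w <= 0 by apply: mulr_ge0_le0 => //; nra.
  have e2 : 0 <= eta * dotv p q by apply: mulr_ge0 => //; lra.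
  have e3 : (c * eta) * dotv p w <= 0 by apply: mulr_ge0_le0 => //; nra.
  rewrite hyp; move: e1 e2 e3; rewrite -!mulrA; lra.
have hY : dotv y y = dotv x x + 2 * c * dotv x p + c^+2 * dotv p p.
  by rewrite hyx !(dotvDl,dotvDr,dotvZl,dotvZr) (dotvC p x); ring.
have hyp2 : dotv y p = dotv x p + c * dotv p p.
  by rewrite hyx dotvDl dotvZl.
have F2 : 0 <= dotv y y + 2 * eta * dotv y p + eta^+2 * dotv p p.
  have := dotv_ge0 (y + eta *: p).
  by rewrite !(dotvDl,dotvDr,dotvZl,dotvZr) (dotvC p y) => H; lra.
move: hY hyp2 F1 F2; set Y := dotv y y; set X := dotv x x; set P2 := dotv p p;
  set a := dotv y p; set b := dotv x p => hY hyp2 F1 F2.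
clear hyp hx hy hyx h1 h2 h3.
have hA : eta * P2 <= - a by lra.
have hA0 : 0 <= - a by apply: le_trans hA; exact: mulr_ge0 (ltW he) hP.
have hYA : eta * (- a) <= Y.
  have : eta * (eta * P2) <= eta * (- a) by apply: ler_wpM2l => //; exact: ltW.
  move: F2; rewrite expr2; nra.
have k1 : 0 <= c * eta * (Y - eta * (- a)) by apply: mulr_ge0; [exact: mulr_ge0 (ltW he)|lra].
have k2 : 0 <= c^+2 * (Y - eta * (- a)) by apply: mulr_ge0; [exact: sqr_ge0|lra].
have k3 : 0 <= c^+2 * eta * (- a - eta * P2) by apply: mulr_ge0; [apply: mulr_ge0 => //; [exact: sqr_ge0|exact: ltW]|lra].
have k4 : 0 <= c * (- a) by exact: mulr_ge0.
have k5 : 0 <= c^+2 * P2 by apply: mulr_ge0 => //; exact: sqr_ge0.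
have hX : X = Y - 2 * c * a + c^+2 * P2 by rewrite hY hyp2; ring.
split; first by rewrite hY; move: k4 k5; rewrite hyp2; nra.
rewrite hX; move: k1 k2 k3; rewrite !expr2; nra.
Qed.

Lemma key (R : realType) (N : nat) (eta beta : R) (L1 L2 : 'M[R]_N) :
  0 < eta ->
  (forall x : 'cV[R]_N, dotv (L1 *m x) x <= 0) ->
  (forall x : 'cV[R]_N, dotv (L2 *m x) x <= 0) ->
  (forall w : 'cV[R]_N, 0 <= dotv (L1 *m w) (L2 *m w)) ->
  forall x : 'cV[R]_N,
  let P := Pgamma eta beta ((eta ^+ 2 + beta ^+ 2) / eta) L1 L2 in
  dotv (P *m x) (P *m x) <= dotv x x /\
  eta^+2 * dotv x x <= (eta + beta^+2/eta)^+2 * dotv (P *m x) (P *m x).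
Proof.
move=> he H1 H2 H3 x P.
have hne : eta != 0 by rewrite gt_eqF.
have hc : 0 <= beta^+2/eta by apply: divr_ge0; [exact: sqr_ge0|exact: ltW].
have hg : (eta ^+ 2 + beta ^+ 2) / eta = eta + beta^+2/eta by field.
have uA : (eta%:M - L1) \in unitmx by exact: posdef_unit.
have uG : (((eta ^+ 2 + beta ^+ 2) / eta)%:M - L2) \in unitmx.
  by apply: posdef_unit => //; rewrite hg; lra.
pose z := invmx (((eta ^+ 2 + beta ^+ 2) / eta)%:M - L2) *m x.
pose w := invmx (eta%:M - L1) *m z.
have hz : (((eta ^+ 2 + beta ^+ 2) / eta)%:M - L2) *m z = x by rewrite /z mulKVmx.
have hw : (eta%:M - L1) *m w = z by rewrite /w mulKVmx.
have hPx : P *m x = (eta%:M - L2) *m z + beta^+2 *: w.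
  by rewrite /P /Pgamma -mulmxA mulmxDl -scalemxAl.
clearbody w z.
have ez : z = eta *: w - L1 *m w by rewrite -hw mulSL.
have L2z : L2 *m z = eta *: (L2 *m w) - L2 *m (L1 *m w).
  by rewrite ez mulmxBr -scalemxAr.
have := @core R N eta (beta^+2/eta) w (L1 *m w) (L2 *m w) (L2 *m (L1 *m w)) x (P *m x) he hc; apply.
- by rewrite -{1}hz mulSL L2z -ez hg.
- rewrite hPx mulSL L2z -ez (divfK hne); reflexivity.
- exact: H1.
- exact: H3.
- exact: H2.
Qed.

Theorem theorem3 (R : realType) (N : nat) (eta beta : R) (L1 L2 : 'M[R]_N) :
  0 < eta ->
  (forall x : 'cV[R]_N, dotv (L1 *m x) x <= 0) ->
  (forall x : 'cV[R]_N, dotv (L2 *m x) x <= 0) ->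
  (forall w : 'cV[R]_N, 0 <= dotv (L1 *m w) (L2 *m w)) ->
  let gamma := (eta ^+ 2 + beta ^+ 2) / eta in
  let P := Pgamma eta beta gamma L1 L2 in
  P \in unitmx /\
  opnorm P * opnorm (invmx P) <= 2 + beta ^+ 2 / eta ^+ 2.
Proof.
move=> he H1 H2 H3 gamma P.
have K := key beta he H1 H2 H3.
set k := 1 + beta ^+ 2 / eta ^+ 2.
have hk0 : 0 <= beta ^+ 2 / eta ^+ 2 by apply: divr_ge0; exact: sqr_ge0.
have hk : (eta + beta^+2/eta) / eta = k by rewrite /k; field; rewrite gt_eqF.
have Bnd : forall x, vnorm x <= k * vnorm (P *m x).
  move=> x; apply: vnorm_le; first by rewrite /k; lra.
  have [_ h] := K x; rewrite -hk expr_div_n.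
  rewrite mulrAC ler_pdivlMr; last by rewrite exprn_gt0.
  by rewrite mulrC.
have Bnd1 : forall x, vnorm (P *m x) <= 1 * vnorm x.
  by move=> x; apply: vnorm_le => //; rewrite expr1n mul1r; have [h _] := K x.
have uP : P \in unitmx.
  apply: inj_unit => x hx; have := Bnd x; rewrite hx vnorm0 mulr0 => h.
  have h0 : Num.sqrt (dotv x x) == 0 by rewrite eq_le h sqrtr_ge0.
  rewrite sqrtr_eq0 in h0.
  by apply: dotv_eq0; apply/eqP; rewrite eq_le h0 dotv_ge0.
split => //.
have BndI : forall y, vnorm (invmx P *m y) <= k * vnorm y.
  by move=> y; have := Bnd (invmx P *m y); rewrite mulKVmx.
have o1 : opnorm P <= 1 by apply: opnorm_le.
have o0 : 0 <= opnorm P by exact: opnorm_ge0 Bnd1.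
have o2 : opnorm (invmx P) <= k by apply: opnorm_le => //; rewrite /k; lra.
have o3 : 0 <= opnorm (invmx P) by exact: opnorm_ge0 BndI.
have : opnorm P * opnorm (invmx P) <= 1 * k.
  by apply: ler_pM.
rewrite /k; lra.
Qed.
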